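(* Let $(X_t)_{t\in\mathbb N_0}$ be real random variables adapted to a filtration $(\mathcal F_t)_{t\in\mathbb N_0}$ with $X_0=x_0$ deterministic, let $\tau^*$ be a stopping time, let $I^-<I^+$ be reals, and define $\tau^+=\inf\{t\ge0:X_t\ge I^+\}$, $\tau^-=\inf\{t\ge0:X_t\le I^-\}$. For a stopping time $\tau$ and parameters $D,s\ge0$, $R\in\mathbb R$, say that the drift conditions hold if for every $t\ge1$: (C1) $\mathbf 1_{\{\tau>t-1\}}\big(X_{t-1}+R-\mathbb E[X_t\mid\mathcal F_{t-1}]\big)\le0$ almost surely, and (C2) conditioned on $\mathcal F_{t-1}$, the random variable $\mathbf 1_{\{\tau>t-1\}}(X_{t-1}+R-X_t)$ satisfies the one-sided $(D,s)$-Bernstein condition. Let $\epsilon>0$. (1) Suppose the drift conditions hold with $R<0$ and $\tau=\tau^*$, and $x_0>I^-$. Then for every positive integer $T\le\frac{(1-\epsilon)(x_0-I^-)}{-R}$, $$\Pr[\tau^-\le\min\{T,\tau^*\}]\le\exp\Big(-\frac{\epsilon^2(x_0-I^-)^2/2}{sT+\epsilon(x_0-I^-)D/3}\Big).$$ (2) Suppose the drift conditions hold with $R>0$ and $\tau=\min\{\tau^+,\tau^-,\tau^*\}$, and $I^-<x_0<I^+$. Then for every positive integer $T\ge\frac{(1+\epsilon)(I^+-x_0)}{R}$, both $\Pr[\tau^+>T\text{ and }\tau^*>T]$ and $\Pr[\tau^+>\tau^-\text{ and }\tau^*>T]$ are at most $$\exp\Big(-\frac{(x_0-I^-)^2/2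}{sT+(x_0-I^-)D/3}\Big)+\exp\Big(-\frac{\epsilon^2(I^+-x_0)^2/2}{sT+\epsilon(I^+-x_0)D/3}\Big).$$
   Context: One-sided Bernstein condition: for $D,s\ge0$, a random variable $Z$ satisfies the one-sided $(D,s)$-Bernstein condition if $\mathbb E[e^{\lambda Z}]\le\exp\!\big(\frac{\lambda^2 s/2}{1-\lambda D/3}\big)$ for all $\lambda\ge0$ with $\lambda D<3$; ''conditioned on $\mathcal F_{t-1}$'' means this holds almost surely with $\mathbb E[\,\cdot\mid\mathcal F_{t-1}]$ in place of $\mathbb E$. Infima of empty sets are $+\infty$. *)

(* Defs.v *)
From HB Require Import structures.
From mathcomp Require Import all_boot all_order all_algebra.
From mathcomp Require Import all_classical all_reals all_analysis.
From mathcomp Require Import measurable_realfun.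
Set Implicit Arguments. Unset Strict Implicit. Unset Printing Implicit Defensive.
Import Order.TTheory GRing.Theory Num.Theory.
Local Open Scope classical_set_scope.
Local Open Scope ring_scope.

Section Defs.
Context {d : measure_display} {T : measurableType d} {R : realType}.
Variable P : probability T R.

Definition filtration (F : nat -> set (set T)) :=
  forall t, [/\ sigma_algebra setT (F t), F t `<=` measurable
              & F t `<=` F t.+1].

Definition G_measurable (G : set (set T)) (f : T -> R) :=
  forall B : set R, measurable B -> G (f @^-1` B).
Definition G_measurable_ext (G : set (set T)) (f : T -> \bar R) :=
  forall B : set (\bar R), measurable B -> G (f @^-1` B).

Definition adapted (F : nat -> set (set T)) (X : nat -> T -> R) :=
  forall t, G_measurable (F t) (X t).

Definition stopping_time (F : nat -> set (set T)) (tau : T -> \bar R) :=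
  (forall w, tau w = +oo%E \/ exists n : nat, tau w = (n%:R)%:E) /\
  forall t : nat, F t [set w | (tau w <= (t%:R)%:E)%E].

(** first hitting times (inf of empty set = +oo) *)
Definition hit_above (X : nat -> T -> R) (I : R) : T -> \bar R :=
  fun w => ereal_inf [set (t%:R)%:E | t in [set t : nat | I <= X t w]].
Definition hit_below (X : nat -> T -> R) (I : R) : T -> \bar R :=
  fun w => ereal_inf [set (t%:R)%:E | t in [set t : nat | X t w <= I]].

Definition cond_exp_version (G : set (set T)) (Y Z : T -> R) :=
  [/\ P.-integrable setT (EFin \o Y), G_measurable G Z,
      P.-integrable setT (EFin \o Z) &
      forall A, G A ->
        (\int[P]_(x in A) (Z x)%:E = \int[P]_(x in A) (Y x)%:E)%E].

Definition cond_exp_version_nneg (G : set (set T)) (Y W : T -> \bar R) :=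
  [/\ measurable_fun setT Y, (forall x, 0 <= Y x)%E,
      G_measurable_ext G W, (forall x, 0 <= W x)%E &
      forall A, G A -> (\int[P]_(x in A) W x = \int[P]_(x in A) Y x)%E].

Definition cond_bernstein (G : set (set T)) (Dp s : R) (Z : T -> R) :=
  forall lam : R, 0 <= lam -> lam * Dp < 3 ->
    exists W, cond_exp_version_nneg G (fun x => (expR (lam * Z x))%:E) W /\
      {ae P, forall x, (W x <= (expR ((lam ^+ 2 * s / 2) / (1 - lam * Dp / 3)))%:E)%E}.

(** drift conditions (C1),(C2) for stopping time tau, parameters D, s, Rd;
    index t here stands for the paper's t-1 (so t+1 >= 1) *)
Definition drift_conditions (F : nat -> set (set T)) (X : nat -> T -> R)
    (tau : T -> \bar R) (Dp s Rd : R) :=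
  forall t : nat,
    (exists Z, cond_exp_version (F t) (X t.+1) Z /\
      {ae P, forall x, (if ((t%:R)%:E < tau x)%E then 1 else 0)
                         * (X t x + Rd - Z x) <= 0}) /\
    cond_bernstein (F t) Dp s
      (fun x => (if ((t%:R)%:E < tau x)%E then 1 else 0)
                  * (X t x + Rd - X t.+1 x)).

End Defs.

(* Main.v *)
Require Import Defs.
From HB Require Import structures.
From mathcomp Require Import all_boot all_order all_algebra.
From mathcomp Require Import all_classical all_reals all_analysis.
From mathcomp Require Import measurable_realfun.
From mathcomp Require Import finmap.
From mathcomp Require Import ring lra.
Import Order.TTheory GRing.Theory Num.Theory.
Local Open Scope classical_set_scope.
Local Open Scope ring_scope.

Set Implicit Arguments. Unset Strict Implicit. Unset Printing Implicit Defensive.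

Section cvgmul.
Local Open Scope ereal_scope.
Lemma cvg_mule_ge0 (R : realType) (u : nat -> R) (l : R) (y : \bar R) :
  (forall n, (0 <= u n)%R) -> nondecreasing_seq u ->
  (EFin \o u) @ \oo --> l%:E -> (0 <= y)%E ->
  (fun n => (u n)%:E * y)%E @ \oo --> (l%:E * y)%E.
Proof.
move=> u0 ndu cu y0.
have ul n : (u n <= l)%R.
  have : (u n)%:E <= limn (EFin \o u).
    apply: lime_ge; first by apply/cvg_ex; exists l%:E.
    near=> m; rewrite /= lee_fin; apply: ndu.
    by near: m; exists n.
  by rewrite (cvg_lim _ cu)// lee_fin.
case: y y0 => [r r0|y0|//].
  by apply: cvgeZr => //; exact: cu.
have [[N uN]|] := pselect (exists N, (0 < u N)%R).
  have l0 : (0 < l)%R by apply: lt_le_trans uN (ul N).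
  rewrite gt0_muley ?lte_fin//; apply: cvg_near_cst; near=> n.
  rewrite gt0_muley// lte_fin; apply: lt_le_trans uN _; apply: ndu.
  by near: n; exists N.
move=> nu.
have u0' n : u n = 0%R.
  apply/eqP; rewrite eq_le u0 andbT leNgt; apply/negP => h.
  by apply: nu; exists n.
have l0 : l = 0%R.
  have : limn (EFin \o u) = 0%E.
    apply/cvg_lim => //; apply: cvg_near_cst; near=> n; by rewrite /= u0'.
  by rewrite (cvg_lim _ cu)// => -[].
rewrite l0 mul0e; apply: cvg_near_cst; near=> n; by rewrite u0' mul0e.
Unshelve. all: by end_near.
Qed.
End cvgmul.

Section Helpers.
Context {d : measure_display} {T : measurableType d} {R : realType}.
Variable P : probability T R.
Local Open Scope ereal_scope.

Lemma gm_mf (G : set (set T)) (f : T -> R) :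
  G_measurable G f -> measurable_fun (setT : set (g_sigma_algebraType G)) f.
Proof.
move=> Gf _ B mB; rewrite setTI; apply: sub_sigma_algebra; exact: Gf.
Qed.

Lemma mf_gm (G : set (set T)) (f : T -> R) : sigma_algebra setT G ->
  measurable_fun (setT : set (g_sigma_algebraType G)) f -> G_measurable G f.
Proof.
move=> sG mf B mB; have := mf measurableT B mB; rewrite setTI => h.
by rewrite -(sigma_algebra_id sG); exact: h.
Qed.

Lemma gm_mT (G : set (set T)) (f : T -> R) : G `<=` measurable ->
  G_measurable G f -> measurable_fun setT f.
Proof. by move=> GM Gf _ B mB; rewrite setTI; exact/GM/Gf. Qed.

Lemma gme_mT (G : set (set T)) (f : T -> \bar R) : G `<=` measurable ->
  G_measurable_ext G f -> measurable_fun setT f.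
Proof. by move=> GM Gf _ B mB; rewrite setTI; exact/GM/Gf. Qed.



End Helpers.

Set Implicit Arguments. Unset Strict Implicit. Unset Printing Implicit Defensive.

Section Transfer.
Context {d : measure_display} {T : measurableType d} {R : realType}.
Variable P : probability T R.
Local Open Scope ereal_scope.
Variables (G : set (set T)) (sG : sigma_algebra setT G) (GM : G `<=` measurable).

Lemma measT'_G (A : set (g_sigma_algebraType G)) : measurable A -> G A.
Proof. by move=> mA; rewrite -(sigma_algebra_id sG); exact: mA. Qed.

Lemma mT'_mT (f : g_sigma_algebraType G -> R) :
  measurable_fun setT f -> measurable_fun (setT : set T) f.
Proof.
move=> mf _ B mB; rewrite setTI; apply: GM; apply: measT'_G.
by have := mf measurableT B mB; rewrite setTI.
Qed.

Import HBNNSimple.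

Lemma simple_int (phi : {nnsfun (g_sigma_algebraType G) >-> R}) (V : T -> \bar R) :
  measurable_fun setT V -> (forall x, 0 <= V x) ->
  \int[P]_x ((phi x)%:E * V x) =
  \sum_(i < #|` fset_set (phi @` setT)|)
     ((fset_set (phi @` setT))`_i)%:E *
      \int[P]_(x in phi @^-1` [set (fset_set (phi @` setT))`_i]) V x.
Proof.
move=> mV V0.
set s := fset_set (phi @` setT).
have s0 (i : 'I_#|` s|) : (0 <= s`_i)%R.
  have : s`_i \in s by apply: mem_nth.
  rewrite in_fset_set; last exact: fimfunP.
  rewrite in_setE.
  by move=> -[x _ <-]; exact: fun_ge0.
have mA (i : 'I_#|` s|) : measurable (phi @^-1` [set s`_i] : set T).
  apply: GM; apply: measT'_G.
  exact: (measurable_sfunP phi (measurable_set1 s`_i)).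
transitivity (\int[P]_x (\sum_(i < #|` s|)
    ((s`_i * \1_(phi @^-1` [set s`_i]) x)%:E * V x))).
  apply: eq_integral => x _.
  rewrite (fimfunEord phi x) -/s -sumEFin ge0_sume_distrl//.
  by move=> i _; rewrite lee_fin mulr_ge0.
rewrite ge0_integral_sum//; last 2 first.
- move=> i; apply: emeasurable_funM => //.
  apply/measurable_EFinP; apply: measurable_funM => //.
- by move=> i x _; rewrite mule_ge0// lee_fin mulr_ge0.
apply: eq_bigr => i _.
rewrite [in RHS]integral_mkcond epatch_indic.
under eq_integral do rewrite EFinM -muleA.
rewrite ge0_integralZl_EFin//; last 2 first.
- by move=> x _; rewrite mule_ge0// lee_fin.
- apply: emeasurable_funM => //.
  apply/measurable_EFinP; exact: (measurable_indic (mA i)).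
congr (_ * _); apply: eq_integral => x _ /=.
by rewrite muleC.
Qed.

Lemma transfer (Y W : T -> \bar R) :
  measurable_fun setT Y -> (forall x, 0 <= Y x) ->
  G_measurable_ext G W -> (forall x, 0 <= W x) ->
  (forall A, G A -> \int[P]_(x in A) W x = \int[P]_(x in A) Y x) ->
  forall h : T -> R, (forall x, (0 <= h x)%R) -> G_measurable G h ->
  \int[P]_x ((h x)%:E * Y x) = \int[P]_x ((h x)%:E * W x).
Proof.
move=> mY Y0 GW W0 eqYW h h0 Gh.
have mW := gme_mT GM GW.
have mh' : measurable_fun (setT : set (g_sigma_algebraType G)) (EFin \o h).
  by apply/measurable_EFinP; exact: gm_mf.
pose phi := nnsfun_approx (measurableT : measurable (setT : set (g_sigma_algebraType G))) mh'.
have key V : measurable_fun setT V -> (forall x, 0 <= V x) ->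
    \int[P]_x ((h x)%:E * V x) = limn (fun n => \int[P]_x ((phi n x)%:E * V x)).
  move=> mV V0.
  rewrite -monotone_convergence//; last 3 first.
  - move=> n; apply: emeasurable_funM => //.
    by apply/measurable_EFinP; apply: mT'_mT.
  - by move=> n x _; rewrite mule_ge0// lee_fin.
  - move=> x _ m n mn; rewrite lee_wpmul2r// lee_fin.
    by have /lefP := nd_nnsfun_approx measurableT mh' mn; apply.
  apply: eq_integral => x _; apply/esym/cvg_lim => //.
  apply: cvg_mule_ge0 => //.
  - by move=> m n mn /=; have /lefP := nd_nnsfun_approx measurableT mh' mn; apply.
  - by apply: cvg_nnsfun_approx => // ? _; rewrite /= lee_fin.
rewrite (key Y)// (key W)//.
suff E : (fun n => \int[P]_x ((phi n x)%:E * Y x)) =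
  (fun n => \int[P]_x ((phi n x)%:E * W x)) by rewrite E.
apply/funext => n.
rewrite simple_int// simple_int//; apply: eq_bigr => i _; congr (_ * _).
by rewrite eqYW//; apply: measT'_G; have := measurable_sfunP (phi n) (measurable_set1 ((fset_set (phi n @` setT))`_i)).
Qed.

End Transfer.

Set Implicit Arguments. Unset Strict Implicit. Unset Printing Implicit Defensive.

Section Step.
Context {d : measure_display} {T : measurableType d} {R : realType}.
Variable P : probability T R.
Local Open Scope ereal_scope.
Variables (G : set (set T)) (sG : sigma_algebra setT G) (GM : G `<=` measurable).

Lemma gm_mul (f g : T -> R) : G_measurable G f -> G_measurable G g ->
  G_measurable G (fun x => f x * g x)%R.
Proof.
move=> Gf Gg; apply: mf_gm => //; apply: measurable_funM; exact: gm_mf.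
Qed.

Lemma gm_indic (B : set T) : G B -> G_measurable G (\1_B : T -> R).
Proof.
move=> GB; apply: mf_gm => //.
apply: (@measurable_indic _ (g_sigma_algebraType G)).
exact: sub_sigma_algebra.
Qed.

Lemma step (Z : T -> R) (lam c : R) W :
  cond_exp_version_nneg P G (fun x => (expR (lam * Z x))%:E) W ->
  {ae P, forall x, W x <= c%:E} -> (1 <= c)%R ->
  forall B, G B -> forall h : T -> R, (forall x, 0 <= h x)%R -> G_measurable G h ->
  \int[P]_x (h x * expR (lam * (\1_B x * Z x)))%:E <= c%:E * \int[P]_x (h x)%:E.
Proof.
move=> [mY Y0 GW W0 eqWY] Wle c1 B GB h h0 Gh.
have mW := gme_mT GM GW.
have mh : measurable_fun setT h := gm_mT GM Gh.
have mB : measurable B := GM GB.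
have GhB : G_measurable G (fun x => h x * \1_B x)%R by apply: gm_mul => //; exact: gm_indic.
have mhB : measurable_fun setT (fun x => h x * \1_B x)%R := gm_mT GM GhB.
have mhB' : measurable_fun setT (fun x => h x * (1 - \1_B x))%R.
  apply: measurable_funM => //; apply: measurable_funB => //.
have hB0 x : (0 <= h x * \1_B x)%R by rewrite mulr_ge0// indicE.
have hB0' x : (0 <= h x * (1 - \1_B x))%R.
  by rewrite mulr_ge0// indicE; case: (_ \in _); rewrite ?subrr ?subr0.
have -> : \int[P]_x (h x * expR (lam * (\1_B x * Z x)))%:E =
    \int[P]_x ((h x * \1_B x)%:E * (expR (lam * Z x))%:E +
                         (h x * (1 - \1_B x))%:E).
  apply: eq_integral => x _; rewrite indicE.
  case: (x \in B); rewrite ?mul1r ?mul0r ?mulr0 ?mulr1 ?subrr ?subr0 ?expR0 ?mulr1.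
    by rewrite mulr0 adde0 EFinM.
  by rewrite mul0e add0e.
rewrite (ge0_integralD P measurableT); [|by move=> x _; rewrite mule_ge0// lee_fin
  |by apply: emeasurable_funM => //; exact/measurable_EFinP
  |by move=> x _; rewrite lee_fin|by apply/measurable_EFinP].
rewrite (transfer sG GM mY Y0 GW W0 eqWY hB0 GhB).
rewrite -(ge0_integralD P measurableT); [|by move=> x _; rewrite mule_ge0// lee_fin
  |by apply: emeasurable_funM => //; exact/measurable_EFinP
  |by move=> x _; rewrite lee_fin|by apply/measurable_EFinP].
rewrite -(ge0_integralZl_EFin P measurableT (f1 := fun x => (h x)%:E)); last 3 first.
- by move=> x _; rewrite lee_fin.
- by apply/measurable_EFinP.
- by rewrite (le_trans _ c1).
apply: ae_ge0_le_integral => //.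
- by move=> x _; apply: adde_ge0; [apply: mule_ge0|]; rewrite ?lee_fin.
- apply: emeasurable_funD; last by apply/measurable_EFinP.
  by apply: emeasurable_funM => //; exact/measurable_EFinP.
- by move=> x _; apply: mule_ge0; rewrite lee_fin// (le_trans _ c1).
- by apply: emeasurable_funM => //; exact/measurable_EFinP.
apply: filterS Wle => x Wx _.
rewrite indicE; case: (x \in B); rewrite ?mulr1 ?mulr0 ?subrr ?subr0 ?mul0e ?add0e ?adde0.
  by rewrite mulr0 adde0 [c%:E * _]muleC; apply: lee_wpmul2l => //; rewrite lee_fin.
by rewrite mulr1 -EFinM lee_fin ler_peMl.
Qed.

End Step.

Set Implicit Arguments. Unset Strict Implicit. Unset Printing Implicit Defensive.

Section MGF.
Context {d : measure_display} {T : measurableType d} {R : realType}.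
Variable P : probability T R.
Local Open Scope ereal_scope.

Lemma gm_comp (G : set (set T)) (f : T -> R) (g : R -> R) :
  G_measurable G f -> measurable_fun setT g -> G_measurable G (g \o f).
Proof.
move=> Gf mg B mB; rewrite comp_preimage; apply: Gf.
by have := mg measurableT B mB; rewrite setTI.
Qed.

Lemma mgf_bound (F : nat -> set (set T)) (Zs : nat -> T -> R) (B : nat -> set T)
    (lam c : R) : filtration F -> (1 <= c)%R ->
  (forall t, exists W, cond_exp_version_nneg P (F t)
      (fun x => (expR (lam * Zs t x))%:E) W /\ {ae P, forall x, W x <= c%:E}) ->
  (forall t, F t (B t)) ->
  (forall n, G_measurable (F n)
      (fun x => \sum_(0 <= t < n) \1_(B t) x * Zs t x)%R) ->
  forall n, \int[P]_x (expR (lam * \sum_(0 <= t < n) \1_(B t) x * Zs t x))%:E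
            <= (c ^+ n)%:E.
Proof.
move=> hF c1 hW hB hS; elim=> [|n IH].
  under eq_integral do rewrite big_geq// mulr0 expR0.
  by rewrite integral_cst// mul1e expr0 probability_le1.
have [sG GM _] := hF n.
have [W [cW Wle]] := hW n.
under eq_integral do rewrite big_nat_recr//= mulrDr expRD.
apply: le_trans.
  apply: (step sG GM cW Wle c1 (hB n)).
  - by move=> x; exact: expR_ge0.
  - have mg : measurable_fun setT (fun y : R => expR (lam * y)).
      by apply: measurableT_comp => //; exact: measurable_funM.
    exact: (gm_comp (hS n) mg).
rewrite exprS EFinM lee_wpmul2l// lee_fin (le_trans _ c1)//.
Qed.

Lemma chernoff (S : T -> R) (lam a : R) : measurable_fun setT S -> (0 <= lam)%R ->
  P [set x | (a <= S x)%R] <=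
    (expR (- lam * a))%:E * \int[P]_x (expR (lam * S x))%:E.
Proof.
move=> mS lam0.
have -> : [set x | (a <= S x)%R] = S @^-1` `[a, +oo[%classic.
  by apply/seteqP; split => x /=; rewrite in_itv /= andbT.
have mA : measurable (S @^-1` `[a, +oo[%classic).
  by have := mS measurableT _ (measurable_itv `[a, +oo[); rewrite setTI.
have -> : P (S @^-1` `[a, +oo[%classic) =
    \int[P]_x (\1_(S @^-1` `[a, +oo[%classic) x)%:E.
  by rewrite integral_indic// setIT.
rewrite -(ge0_integralZl_EFin P measurableT (f1 := fun x => (expR (lam * S x))%:E));
  [|by move=> x _; rewrite lee_fin expR_ge0
   |by apply/measurable_EFinP; apply: measurableT_comp => //; exact: measurable_funM
   |exact: expR_ge0].
apply: ge0_le_integral => //.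
- by apply/measurable_EFinP; exact: (measurable_indic mA).
- apply: emeasurable_funM => //; apply/measurable_EFinP.
  by apply: measurableT_comp => //; exact: measurable_funM.
move=> x _; rewrite -EFinM lee_fin indicE.
case: (boolP (x \in _)) => [|_]; last by rewrite mulr_ge0// expR_ge0.
rewrite in_setE /= in_itv /= andbT => aS.
rewrite -expRD; apply: le_trans (expR_ge1Dx _).
rewrite lerDl mulNr addrC -mulrBr mulr_ge0// subr_ge0//.
Qed.

End MGF.

Set Implicit Arguments. Unset Strict Implicit. Unset Printing Implicit Defensive.

Lemma opt_lambda (R : realType) (a s D Tn : R) : 0 < a -> 0 <= s -> 0 <= D -> 0 < Tn ->
  exists lam, [/\ 0 <= lam, lam * D < 3 &
   - lam * a + Tn * ((lam ^+ 2 * s / 2) / (1 - lam * D / 3))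
     <= - ((a ^+ 2 / 2) / (s * Tn + a * D / 3))].
Proof.
move=> a0 s0 D0 T0.
have [sp|] := ltP 0 s.
  set Q := s * Tn + a * D / 3.
  have Q0 : 0 < Q by rewrite /Q ltr_pwDl ?mulr_gt0// divr_ge0// mulr_ge0// ltW.
  exists (a / Q); split.
  - by rewrite divr_ge0// ltW.
  - rewrite mulrAC ltr_pdivrMr// /Q mulrDr.
    have : 0 < 3 * (s * Tn) by rewrite mulr_gt0// mulr_gt0.
    move=> h; rewrite [X in _ < _ + X]mulrC divfK; last by [].
    by rewrite ltrDr.
  have e : 1 - a / Q * D / 3 = s * Tn / Q.
    rewrite /Q; field.
    have h1 : 0 < s * Tn by rewrite mulr_gt0.
    have h2 : 0 <= a * D by rewrite mulr_ge0// ltW.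
    apply/eqP; lra.
  rewrite e le_eqVlt; apply/orP; left; apply/eqP.
  rewrite /Q; field.
  have h1 : 0 < s * Tn by rewrite mulr_gt0.
  have h2 : 0 <= a * D by rewrite mulr_ge0// ltW.
  rewrite (gt_eqF T0) (gt_eqF sp) andbT; apply/eqP; lra.
rewrite le_eqVlt => /orP[/eqP s00|]; last by rewrite ltNge s0.
rewrite s00.
have [Dp|] := ltP 0 D.
  exists (3 / (2 * D)); split.
  - by rewrite divr_ge0// mulr_ge0// ltW.
  - have -> : 3 / (2 * D) * D = 3 / 2.
      by field; rewrite gt_eqF.
    lra.
  rewrite !(mulr0, mul0r, add0r).
  rewrite le_eqVlt; apply/orP; left; apply/eqP.
  by field; rewrite !gt_eqF.
rewrite le_eqVlt => /orP[/eqP D00|]; last by rewrite ltNge D0.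
exists 0; split => //; first by rewrite D00 mulr0.
by rewrite D00 !(mulr0, mul0r, add0r, oppr0, subr0, invr0, expr0n) /=.
Qed.

Set Implicit Arguments. Unset Strict Implicit. Unset Printing Implicit Defensive.

Section Hit.
Context {R : realType}.
Local Open Scope ereal_scope.

Definition hitp (p : nat -> Prop) : \bar R :=
  ereal_inf [set (t%:R)%:E | t in [set t | p t]].

Lemma hitp_le p n : hitp p <= (n%:R)%:E <-> exists k, (k <= n)%N /\ p k.
Proof.
split.
- move=> h; apply: contrapT => nk.
  have : ((n.+1)%:R)%:E <= hitp p.
    apply: le_ereal_inf_tmp => _ [t pt <-]; rewrite lee_fin ler_nat.
    by rewrite ltnNge; apply/negP => tn; apply: nk; exists t; split.
  move=> h2; have := le_trans h2 h; rewrite lee_fin ler_nat ltnn.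
  by [].
- move=> [k [kn pk]]; apply: ge_ereal_inf; exists (k%:R)%:E; first by exists k.
  by rewrite lee_fin ler_nat.
Qed.

Lemma hitp_lt p n : (n%:R)%:E < hitp p <-> forall k, (k <= n)%N -> ~ p k.
Proof.
rewrite ltNge; split.
- move=> /negP h k kn pk; apply: h; apply/hitp_le; by exists k.
- move=> h; apply/negP => /hitp_le [k [kn pk]]; exact: h kn pk.
Qed.

Lemma hitp_eq p k : p k -> (forall j, (j < k)%N -> ~ p j) -> hitp p = (k%:R)%:E.
Proof.
move=> pk hk; apply/le_anti/andP; split.
  by apply/hitp_le; exists k.
apply: le_ereal_inf_tmp => _ [t pt <-]; rewrite lee_fin ler_nat.
by rewrite leqNgt; apply/negP => tk; exact: hk tk pt.
Qed.

Lemma hitp_oo p : (forall j, ~ p j) -> hitp p = +oo.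
Proof.
move=> h; rewrite /hitp.
suff -> : [set (t%:R)%:E | t in [set t | p t]] = set0 :> set (\bar R) by rewrite ereal_inf0.
by apply/seteqP; split => // x [t pt _]; exfalso; exact: h pt.
Qed.

End Hit.

Lemma ex_min (p : nat -> Prop) : (exists k, p k) ->
  exists k, p k /\ forall j, (j < k)%N -> ~ p j.
Proof.
move=> e; have e' : exists k, `[< p k >] by case: e => k pk; exists k; exact/asboolP.
case: (ex_minnP e') => k /asboolP pk hmin; exists k; split => // j jk pj.
by have := hmin j (asboolT pj); rewrite leqNgt jk.
Qed.

Section Stop.
Context {d : measure_display} {T : measurableType d} {R : realType}.
Local Open Scope ereal_scope.

Lemma filt_mono (F : nat -> set (set T)) : filtration F ->
  forall s t, (s <= t)%N -> F s `<=` F t.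
Proof.
move=> hF s; elim=> [|t IH].
  by rewrite leqn0 => /eqP ->.
rewrite leq_eqVlt => /orP[/eqP -> //|].
rewrite ltnS => st; apply: subset_trans (IH st) _.
by have [_ _ ?] := hF t.
Qed.

Lemma st_lt (F : nat -> set (set T)) (tau : T -> \bar R) : filtration F ->
  stopping_time F tau -> forall t : nat, F t [set x | (t%:R)%:E < tau x].
Proof.
move=> hF [_ hst] t.
have [[_ hC _] _ _] := hF t.
rewrite (_ : [set x | _] = setT `\` [set x | tau x <= (t%:R)%:E]); first exact: hC.
apply/seteqP; split => x /=.
  by rewrite ltNge => /negP h; split.
by move=> [_ /negP h]; rewrite ltNge.
Qed.

Lemma st_ge (F : nat -> set (set T)) (tau : T -> \bar R) : filtration F ->
  stopping_time F tau -> forall k : nat, measurable [set x | (k%:R)%:E <= tau x].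
Proof.
move=> hF hst; case=> [|j].
  rewrite (_ : [set x | _] = setT) //.
  apply/seteqP; split => // x _ /=.
  by case: (hst.1 x) => [->|[n ->]]; rewrite ?leey// lee_fin.
rewrite (_ : [set x | _] = [set x | (j%:R)%:E < tau x]).
  by have [_ GM _] := hF j; apply: GM; exact: st_lt.
apply/seteqP; split => x /=; case: (hst.1 x) => [->|[n ->]]; rewrite ?ltey ?leey//.
  by rewrite lee_fin lte_fin ler_nat ltr_nat.
by rewrite lee_fin lte_fin ler_nat ltr_nat.
Qed.

End Stop.

Set Implicit Arguments. Unset Strict Implicit. Unset Printing Implicit Defensive.

Section Tail.
Context {d : measure_display} {T : measurableType d} {R : realType}.
Variable P : probability T R.

Lemma gm_lift (G1 G2 : set (set T)) (f : T -> R) : G1 `<=` G2 ->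
  G_measurable G1 f -> G_measurable G2 f.
Proof. by move=> h Gf B mB; apply: h; exact: Gf. Qed.

Lemma gm_cst (G : set (set T)) (r : R) : sigma_algebra setT G ->
  G_measurable G (fun _ => r).
Proof. by move=> sG; apply: mf_gm => //; exact: measurable_cst. Qed.

Lemma gm_add (G : set (set T)) (f g : T -> R) : sigma_algebra setT G ->
  G_measurable G f -> G_measurable G g -> G_measurable G (fun x => f x + g x).
Proof.
by move=> sG Gf Gg; apply: mf_gm => //; apply: measurable_funD; exact: gm_mf.
Qed.

Lemma gm_sub (G : set (set T)) (f g : T -> R) : sigma_algebra setT G ->
  G_measurable G f -> G_measurable G g -> G_measurable G (fun x => f x - g x).
Proof.
by move=> sG Gf Gg; apply: mf_gm => //; apply: measurable_funB; exact: gm_mf.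
Qed.

Lemma ifindE (b : T -> bool) :
  (fun x => if b x then 1 else 0 : R) = \1_[set x | b x].
Proof.
apply/funext => x; rewrite indicE; case: (boolP (b x)) => bx.
  by rewrite mem_set.
by rewrite memNset //=; apply/negP.
Qed.

Variables (F : nat -> set (set T)) (X : nat -> T -> R) (tau : T -> \bar R).
Hypothesis hF : filtration F.
Hypothesis hX : adapted F X.
Hypothesis htau : forall t : nat, F t [set x | ((t%:R)%:E < tau x)%E].

Definition Zs (Rd : R) t x :=
  (if ((t%:R)%:E < tau x)%E then 1 else 0) * (X t x + Rd - X t.+1 x).

Definition Ssum (Rd : R) (B : nat -> set T) n x :=
  \sum_(0 <= t < n) \1_(B t) x * Zs Rd t x.

Lemma Ssum_meas Rd B : (forall t, F t (B t)) ->
  forall n, G_measurable (F n) (Ssum Rd B n).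
Proof.
move=> hB; elim=> [|n IH].
  have [sG _ _] := hF 0%N.
  rewrite /Ssum; under eq_fun do rewrite big_geq//.
  exact: gm_cst.
have [sG _ _] := hF n.+1.
have Fn : F n `<=` F n.+1 by have [_ _ ?] := hF n.
rewrite /Ssum; under eq_fun do rewrite big_nat_recr//=.
apply: gm_add => //; first exact: (gm_lift Fn IH).
apply: gm_mul => //; first by apply: gm_indic => //; apply: Fn; exact: hB.
rewrite /Zs; apply: gm_mul => //.
  rewrite (ifindE (fun x => ((n%:R)%:E < tau x)%E)).
  by apply: gm_indic => //; apply: Fn; exact: htau.
apply: gm_sub => //.
apply: gm_add => //; last exact: gm_cst.
exact: (gm_lift Fn (hX n)).
Qed.

Lemma tail_bound (Dp s Rd : R) (B : nat -> set T) (a : R) (Tn : nat) :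
  (0 <= Dp)%R -> (0 <= s)%R -> drift_conditions P F X tau Dp s Rd ->
  (forall t, F t (B t)) -> (0 < a)%R -> (0 < Tn)%N ->
  (P [set x | (a <= Ssum Rd B Tn x)%R] <=
    (expR (- ((a ^+ 2 / 2) / (s * Tn%:R + a * Dp / 3))))%:E)%E.
Proof.
move=> Dp0 s0 hdr hB a0 T0.
have T0' : (0 < (Tn%:R : R))%R by rewrite ltr0n.
have [lam [lam0 lamD hlam]] := opt_lambda a0 s0 Dp0 T0'.
pose q := (lam ^+ 2 * s / 2) / (1 - lam * Dp / 3).
have q0 : (0 <= q)%R.
  have h1 : (0 <= 1 - lam * Dp / 3)%R by lra.
  by rewrite /q divr_ge0// divr_ge0// mulr_ge0// sqr_ge0.
have c1 : (1 <= expR q)%R by rewrite (le_trans _ (expR_ge1Dx q))// lerDl.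
have [sGT GMT _] := hF Tn.
have mS : measurable_fun setT (Ssum Rd B Tn).
  exact: (gm_mT GMT (Ssum_meas Rd hB Tn)).
apply: le_trans (chernoff P a mS lam0) _.
apply: le_trans.
  apply: lee_wpmul2l; first by rewrite lee_fin expR_ge0.
  apply: (mgf_bound (Zs := Zs Rd) (B := B) (lam := lam) (c := expR q) hF c1) => //.
  - move=> t; have [_ hb] := hdr t.
    have [W [cW Wle]] := hb lam lam0 lamD.
    by exists W; split.
  - exact: Ssum_meas.
rewrite -EFinM lee_fin -expRM_natl -expRD ler_expR.
exact: hlam.
Qed.

End Tail.

Set Implicit Arguments. Unset Strict Implicit. Unset Printing Implicit Defensive.

Section Main.
Context {d : measure_display} {T : measurableType d} {R : realType}.
Variable P : probability T R.
Variables (F : nat -> set (set T)) (X : nat -> T -> R) (x0 : R)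
  (taus : T -> \bar R) (Im Ip : R).
Hypotheses (hF : filtration F) (hX : adapted F X)
  (hX0 : forall w, X 0%N w = x0) (hst : stopping_time F taus).

Lemma FI t (A B : set T) : F t A -> F t B -> F t (A `&` B).
Proof.
have [sG _ _] := hF t => hA hB.
by apply: (measT'_G sG); apply: measurableI; exact: sub_sigma_algebra.
Qed.

Lemma Fall t (U : set R) : measurable U ->
  F t [set x | forall j, (j <= t)%N -> U (X j x)].
Proof.
move=> mU; have [sG _ _] := hF t.
rewrite (_ : [set x | _] = \bigcap_(j in [set j | (j <= t)%N]) (X j @^-1` U)); last first.
  by apply/seteqP; split => x /= h j; [move=> jt; exact: h | exact: h].
apply: (measT'_G sG); apply: bigcap_measurableType => j jt.
have := gm_mf (gm_lift (filt_mono hF jt) (hX j)) measurableT mU.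
by rewrite setTI.
Qed.

Definition Bm t := [set x | forall j, (j <= t)%N -> (Im < X j x)%R].

Lemma FBm t : F t (Bm t).
Proof.
have := Fall t (measurable_itv `]Im, +oo[).
congr (F t _); apply/seteqP; split => x /= h j jt; have := h j jt;
  by rewrite /= in_itv /= andbT.
Qed.

Lemma Fha t : F t [set x | ((t%:R)%:E < hit_above X Ip x)%E].
Proof.
have := Fall t (measurable_itv `]-oo, Ip[).
congr (F t _); apply/seteqP; split => x /= h.
- apply/(hitp_lt (fun j => Ip <= X j x)) => j jt.
  by have := h j jt; rewrite /= in_itv /= => /[swap] /le_lt_trans /[apply]; rewrite ltxx.
- move/(hitp_lt (fun j => Ip <= X j x)): h => h j jt; rewrite /= in_itv /=.
  by rewrite ltNge; apply/negP; exact: h.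
Qed.

Lemma Fhb t : F t [set x | ((t%:R)%:E < hit_below X Im x)%E].
Proof.
have := FBm t.
congr (F t _); apply/seteqP; split => x /= h.
- apply/(hitp_lt (fun j => X j x <= Im)) => j jt.
  by have := h j jt => /[swap] /lt_le_trans /[apply]; rewrite ltxx.
- move/(hitp_lt (fun j => X j x <= Im)): h => h j jt.
  by rewrite ltNge; apply/negP; exact: h.
Qed.

Lemma Ssum_tel tau Rd B n k x : (k <= n)%N ->
  (forall t, (t < k)%N -> B t x /\ ((t%:R)%:E < tau x)%E) ->
  (forall t, (k <= t)%N -> (t < n)%N -> ~ B t x) ->
  Ssum X tau Rd B n x = x0 - X k x + k%:R * Rd.
Proof.
move=> kn h1 h2.
rewrite /Ssum (big_cat_nat (leq0n k) kn) /=.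
rewrite [Y in _ + Y]big_nat_cond [Y in _ + Y]big1 ?addr0; last first.
  move=> t /andP[/andP[kt tn] _]; rewrite indicE memNset ?mul0r//; exact: h2.
rewrite big_nat_cond (eq_bigr (fun t => Rd - (X t.+1 x - X t x))); last first.
  move=> t /andP[/andP[_ tk] _]; have [Bt tt] := h1 t tk.
  rewrite indicE mem_set// mul1r /Zs tt mul1r; ring.
rewrite -big_nat_cond big_split /= sumrN telescope_sumr// hX0 sumr_const_nat subn0.
rewrite -mulr_natl; ring.
Qed.

Lemma min_hit x n : (exists k, (k <= n)%N /\ (X k x <= Im)%R) ->
  exists k, [/\ (k <= n)%N, (X k x <= Im)%R, (forall j, (j < k)%N -> (Im < X j x)%R)
    & hit_below X Im x = (k%:R)%:E].
Proof.
move=> [k1 [k1n Xk1]].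
have [k [pk hk]] := ex_min (ex_intro (fun k => (X k x <= Im)%R) k1 Xk1).
have kk1 : (k <= k1)%N by rewrite leqNgt; apply/negP => /hk; apply.
exists k; split => //.
- exact: leq_trans kk1 k1n.
- by move=> j jk; rewrite ltNge; apply/negP; exact: hk.
- by change (hitp (R:=R) (fun j => (X j x <= Im)%R) = (k%:R)%:E); apply: hitp_eq.
Qed.

Lemma meas_ge (f : T -> R) a : measurable_fun setT f -> measurable [set x | (a <= f x)%R].
Proof.
move=> mf; rewrite (_ : [set x | _] = f @^-1` `[a, +oo[%classic).
  by have := mf measurableT _ (measurable_itv `[a, +oo[); rewrite setTI.
by apply/seteqP; split => x /=; rewrite in_itv /= andbT.
Qed.

Lemma meas_leX k : measurable [set x | (X k x <= Im)%R].
Proof.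
have [_ GM _] := hF k.
have mX := gm_mT GM (hX k).
rewrite (_ : [set x | _] = X k @^-1` `]-oo, Im]%classic).
  by have := mX measurableT _ (measurable_itv `]-oo, Im]); rewrite setTI.
by apply/seteqP; split => x /=; rewrite in_itv /=.
Qed.

Lemma part1 eps Dp s Rd : (0 < eps)%R -> (0 <= Dp)%R -> (0 <= s)%R -> (Rd < 0)%R ->
  drift_conditions P F X taus Dp s Rd -> (Im < x0)%R ->
  forall Tn : nat, (0 < Tn)%N -> (Tn%:R <= (1 - eps) * (x0 - Im) / (- Rd))%R ->
  (P [set w | (hit_below X Im w <= Order.min (Tn%:R)%:E (taus w))%E]
    <= (expR (- ((eps ^+ 2 * (x0 - Im) ^+ 2 / 2)
                    / (s * Tn%:R + eps * (x0 - Im) * Dp / 3))))%:E)%E.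
Proof.
move=> eps0 Dp0 s0 Rd0 hdr Imx0 Tn T0 hT.
have htau := st_lt hF hst.
have a0 : (0 < eps * (x0 - Im))%R by rewrite mulr_gt0// subr_gt0.
rewrite -exprMn.
have hTb := tail_bound hF hX htau Dp0 s0 hdr FBm a0 T0.
apply: le_trans hTb.
have [_ GMT _] := hF Tn.
have mS := gm_mT GMT (Ssum_meas hF hX htau Rd FBm Tn).
have Echar : [set w | (hit_below X Im w <= Order.min (Tn%:R)%:E (taus w))%E] =
    \bigcup_(k in [set k | (k <= Tn)%N])
      ([set x | (X k x <= Im)%R] `&` [set x | ((k%:R)%:E <= taus x)%E]).
  apply/seteqP; split => x /=.
  - rewrite le_min => /andP[h1 h2].
    have /(hitp_le (fun j => X j x <= Im)%R) [k [kT Xk]] := h1.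
    have [k0 [k0T Xk0 _ hk0]] := min_hit (ex_intro _ k (conj kT Xk)).
    exists k0 => //; split => //.
    by rewrite -hk0.
  - move=> [k kT [Xk kt]].
    have hk : (hit_below X Im x <= (k%:R)%:E)%E.
      by apply/(hitp_le (fun j => X j x <= Im)%R); exists k.
    rewrite le_min; apply/andP; split; apply: le_trans hk _ => //.
    by rewrite lee_fin ler_nat.
apply: le_measure; rewrite ?inE.
- rewrite Echar in_setE; apply: bigcup_measurable => k _; apply: measurableI.
    exact: meas_leX.
  exact: st_ge hF hst k.
- by rewrite in_setE; exact: meas_ge.
rewrite Echar => x [k kT [Xk ktau]] /=.
have [k0 [k0T Xk0 hk0 _]] := min_hit (ex_intro _ k (conj kT Xk)).
have k0k : (k0 <= k)%N.
  by rewrite leqNgt; apply/negP => /hk0; rewrite ltNge Xk.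
rewrite (@Ssum_tel taus Rd Bm Tn k0 x k0T); last 2 first.
- move=> t tk; split.
    by move=> j jt; apply: hk0; exact: leq_ltn_trans jt tk.
  apply: lt_le_trans ktau; rewrite lte_fin ltr_nat.
  exact: leq_trans tk k0k.
- move=> t kt _ /(_ k0 kt); by rewrite ltNge Xk0.
have h1 : (Tn%:R * Rd <= k0%:R * Rd)%R.
  apply: ler_wnM2r; first exact: ltW.
  by rewrite ler_nat; exact: leq_trans k0k kT.
have h2 : (Tn%:R * (- Rd) <= (1 - eps) * (x0 - Im))%R.
  by rewrite -ler_pdivlMr ?oppr_gt0.
lra.
Qed.

Lemma FT t : F t setT.
Proof. by have [[h0 hC _] _ _] := hF t; have := hC set0 h0; rewrite setD0. Qed.

Lemma part2 eps Dp s Rd : (0 < eps)%R -> (0 <= Dp)%R -> (0 <= s)%R -> (0 < Rd)%R ->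
  drift_conditions P F X
      (fun w => Order.min (hit_above X Ip w)
                  (Order.min (hit_below X Im w) (taus w))) Dp s Rd ->
  (Im < x0)%R -> (x0 < Ip)%R ->
  forall Tn : nat, (0 < Tn)%N -> ((1 + eps) * (Ip - x0) / Rd <= Tn%:R)%R ->
      let bound := expR (- (((x0 - Im) ^+ 2 / 2)
                             / (s * Tn%:R + (x0 - Im) * Dp / 3)))
                 + expR (- ((eps ^+ 2 * (Ip - x0) ^+ 2 / 2)
                             / (s * Tn%:R + eps * (Ip - x0) * Dp / 3))) in
      (P [set w | ((Tn%:R)%:E < hit_above X Ip w)%E /\ ((Tn%:R)%:E < taus w)%E]
         <= bound%:E)%E /\
      (P [set w | (hit_below X Im w < hit_above X Ip w)%E /\ ((Tn%:R)%:E < taus w)%E]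
         <= bound%:E)%E.
Proof.
move=> eps0 Dp0 s0 Rd0 hdr Imx0 x0Ip Tn T0 hT bound.
pose tau2 := fun w => Order.min (hit_above X Ip w)
                  (Order.min (hit_below X Im w) (taus w)).
have htau2 : forall t : nat, F t [set x | ((t%:R)%:E < tau2 x)%E].
  move=> t; rewrite (_ : [set x | _] = [set x | ((t%:R)%:E < hit_above X Ip x)%E] `&`
      ([set x | ((t%:R)%:E < hit_below X Im x)%E] `&` [set x | ((t%:R)%:E < taus x)%E])).
    apply: FI; first exact: Fha.
    by apply: FI; [exact: Fhb|exact: (st_lt hF hst t)].
  apply/seteqP; split => x /=; rewrite /tau2 !lt_min.
    by move=> /andP[-> /andP[-> ->]].
  by move=> [-> [-> ->]].
have a10 : (0 < x0 - Im)%R by rewrite subr_gt0.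
have a20 : (0 < eps * (Ip - x0))%R by rewrite mulr_gt0// subr_gt0.
have hb1 := tail_bound hF hX htau2 Dp0 s0 hdr FBm a10 T0.
have hb2 := tail_bound hF hX htau2 Dp0 s0 hdr FT a20 T0.
rewrite exprMn in hb2.
have [_ GMT _] := hF Tn.
have mS1 := gm_mT GMT (Ssum_meas hF hX htau2 Rd FBm Tn).
have mS2 := gm_mT GMT (Ssum_meas hF hX htau2 Rd FT Tn).
set S1 := [set x | (x0 - Im <= Ssum X tau2 Rd Bm Tn x)%R] in hb1.
set S2 := [set x | (eps * (Ip - x0) <= Ssum X tau2 Rd (fun _ => setT) Tn x)%R] in hb2.
have mS1' : measurable S1 by exact: meas_ge.
have mS2' : measurable S2 by exact: meas_ge.
have key : forall E, measurable E -> E `<=` S1 `|` S2 -> (P E <= bound%:E)%E.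
  move=> E mE ES.
  apply: le_trans (le_measure _ _ _ ES) _; rewrite ?in_setE//; first exact: measurableU.
  apply: le_trans (measureU2 _ mS1' mS2') _.
  by rewrite /bound EFinD; apply: leeD.
have K1 : forall x k, (k <= Tn)%N -> (X k x <= Im)%R ->
    (forall j, (j < k)%N -> (Im < X j x)%R) ->
    hit_below X Im x = (k%:R)%:E ->
    ((k%:R)%:E < hit_above X Ip x)%E -> ((Tn%:R)%:E < taus x)%E -> S1 x.
  move=> x k kT Xk hk hbk kha Ttaus; rewrite /S1 /=.
  rewrite (@Ssum_tel tau2 Rd Bm Tn k x kT); last 2 first.
  - move=> t tk; split.
      by move=> j jt; apply: hk; exact: leq_ltn_trans jt tk.
    rewrite /tau2 !lt_min hbk; apply/andP; split.
      by apply: lt_trans kha; rewrite lte_fin ltr_nat.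
    apply/andP; split; first by rewrite lte_fin ltr_nat.
    apply: le_lt_trans Ttaus; rewrite lee_fin ler_nat ltnW//.
    exact: leq_trans tk kT.
  - move=> t kt _ /(_ k kt); by rewrite ltNge Xk.
  have : (0 <= k%:R * Rd)%R by rewrite mulr_ge0// ltW.
  lra.
have K2 : forall x, (forall j, (j <= Tn)%N -> (Im < X j x)%R) ->
    ((Tn%:R)%:E < hit_above X Ip x)%E -> ((Tn%:R)%:E < taus x)%E -> S2 x.
  move=> x hIm Tha Ttaus; rewrite /S2 /=.
  have Thb : ((Tn%:R)%:E < hit_below X Im x)%E.
    apply/(hitp_lt (fun j => X j x <= Im)%R) => j jT.
    by rewrite leNgt hIm.
  rewrite (@Ssum_tel tau2 Rd (fun _ => setT) Tn Tn x (leqnn Tn)); last 2 first.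
  - move=> t tT; split => //.
    rewrite /tau2 !lt_min; apply/andP; split.
      by apply: lt_trans Tha; rewrite lte_fin ltr_nat.
    apply/andP; split; first by apply: lt_trans Thb; rewrite lte_fin ltr_nat.
    by apply: lt_trans Ttaus; rewrite lte_fin ltr_nat.
  - by move=> t Tt tT; exfalso; move: (leq_ltn_trans Tt tT); rewrite ltnn.
  have XT : (X Tn x < Ip)%R.
    move/(hitp_lt (fun j => Ip <= X j x)%R): Tha => /(_ Tn (leqnn Tn)).
    by rewrite ltNge => /negP.
  have h2 : ((1 + eps) * (Ip - x0) <= Tn%:R * Rd)%R.
    by rewrite -ler_pdivrMr.
  lra.
have cases : forall x, (exists k, (k <= Tn)%N /\ (X k x <= Im)%R) \/
    (forall j, (j <= Tn)%N -> (Im < X j x)%R).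
  move=> x; have [h|h] := pselect (exists k, (k <= Tn)%N /\ (X k x <= Im)%R).
    by left.
  right => j jT; rewrite ltNge; apply/negP => Xj; apply: h; by exists j.
split.
- apply: key.
    apply: measurableI.
      by apply: GMT; exact: Fha.
    by apply: GMT; exact: (st_lt hF hst Tn).
  move=> x [Tha Ttaus]; case: (cases x) => [ex|hIm]; last by right; exact: K2.
  have [k [kT Xk hk hbk]] := min_hit ex.
  left; apply: (K1 x k) => //.
  by apply: le_lt_trans Tha; rewrite lee_fin ler_nat.
- have Echar : [set w | (hit_below X Im w < hit_above X Ip w)%E /\ ((Tn%:R)%:E < taus w)%E]
      = (\bigcup_k ([set x | (X k x <= Im)%R] `&`
                    [set x | ((k%:R)%:E < hit_above X Ip x)%E])) `&`
        [set x | ((Tn%:R)%:E < taus x)%E].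
    apply/seteqP; split => x /=.
    + move=> [hlt Ttaus]; split => //.
      have [ex|nex] := pselect (exists k, (X k x <= Im)%R).
        have [k Xk] := ex.
        have [k0 [_ Xk0 _ hbk]] := min_hit (ex_intro _ k (conj (leqnn k) Xk)).
        by exists k0 => //; split => //; rewrite -hbk.
      exfalso; move: hlt.
      rewrite (_ : hit_below X Im x = +oo%E) ?ltNge ?leey//.
      change (hitp (R:=R) (fun j => (X j x <= Im)%R) = +oo%E).
      by apply: hitp_oo => j Xj; apply: nex; exists j.
    + move=> [[k _ [Xk kha]] Ttaus]; split => //.
      apply: le_lt_trans kha.
      by apply/(hitp_le (fun j => X j x <= Im)%R); exists k.
  apply: key.
    rewrite Echar; apply: measurableI; last by apply: GMT; exact: (st_lt hF hst Tn).
    apply: bigcupT_measurable => k; apply: measurableI; first exact: meas_leX.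
    by have [_ GMk _] := hF k; apply: GMk; exact: Fha.
  move=> x [hlt Ttaus]; case: (cases x) => [ex|hIm].
    have [k [kT Xk hk hbk]] := min_hit ex.
    by left; apply: (K1 x k) => //; rewrite -hbk.
  right; apply: K2 => //.
  apply: lt_trans hlt.
  apply/(hitp_lt (fun j => X j x <= Im)%R) => j jT.
  by rewrite leNgt hIm.
Qed.

End Main.

Unset Implicit Arguments.
Set Strict Implicit.

Theorem mainTheorem19 (d : measure_display) (T : measurableType d)
  (R : realType) (P : probability T R) (F : nat -> set (set T))
  (X : nat -> T -> R) (x0 : R) (taus : T -> \bar R) (Im Ip eps : R) :
  filtration F -> adapted F X -> (forall w, X 0%N w = x0) ->
  stopping_time F taus -> Im < Ip -> 0 < eps ->
  (forall Dp s Rd : R, 0 <= Dp -> 0 <= s -> Rd < 0 ->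
    drift_conditions P F X taus Dp s Rd -> Im < x0 ->
    forall Tn : nat, (0 < Tn)%N ->
      Tn%:R <= (1 - eps) * (x0 - Im) / (- Rd) ->
      (P [set w | (hit_below X Im w <= Order.min (Tn%:R)%:E (taus w))%E]
        <= (expR (- ((eps ^+ 2 * (x0 - Im) ^+ 2 / 2)
                    / (s * Tn%:R + eps * (x0 - Im) * Dp / 3))))%:E)%E) /\
  (forall Dp s Rd : R, 0 <= Dp -> 0 <= s -> 0 < Rd ->
    drift_conditions P F X
      (fun w => Order.min (hit_above X Ip w)
                  (Order.min (hit_below X Im w) (taus w))) Dp s Rd ->
    Im < x0 -> x0 < Ip ->
    forall Tn : nat, (0 < Tn)%N ->
      (1 + eps) * (Ip - x0) / Rd <= Tn%:R ->
      let bound := expR (- (((x0 - Im) ^+ 2 / 2)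
                             / (s * Tn%:R + (x0 - Im) * Dp / 3)))
                 + expR (- ((eps ^+ 2 * (Ip - x0) ^+ 2 / 2)
                             / (s * Tn%:R + eps * (Ip - x0) * Dp / 3))) in
      (P [set w | ((Tn%:R)%:E < hit_above X Ip w)%E /\ ((Tn%:R)%:E < taus w)%E]
         <= bound%:E)%E /\
      (P [set w | (hit_below X Im w < hit_above X Ip w)%E /\ ((Tn%:R)%:E < taus w)%E]
         <= bound%:E)%E).
Proof.
move=> hF hX hX0 hst ImIp eps0; split.
- move=> Dp s Rd Dp0 s0 Rd0 hdr Imx0 Tn T0 hT.
  exact: (part1 hF hX hX0 hst eps0 Dp0 s0 Rd0 hdr Imx0 T0 hT).
- move=> Dp s Rd Dp0 s0 Rd0 hdr Imx0 x0Ip Tn T0 hT.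
  exact: (part2 hF hX hX0 hst eps0 Dp0 s0 Rd0 hdr Imx0 x0Ip T0 hT).
Qed.
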